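(* Let $R$ be a commutative ring with unity in which every zero divisor is harmless. Then every B-irreducible element of $R$ is irreducible.
   Context: A zero divisor $r$ of $R$ is called harmless if there exists a unit $u\in R$ with $r=1-u$. An element $r\in R$ is called irreducible if whenever $r=ab$ with $a,b\in R$, then $a$ is a unit or $b$ is a unit. A non-zero, non-unit element $r\in R$ is called B-irreducible if the principal ideal $(r)$ is a maximal element, with respect to inclusion, of the set of all proper principal ideals of $R$. *)

(* Defs.v *)
From HB Require Import structures.
From mathcomp Require Import all_boot all_algebra.
Set Implicit Arguments. Unset Strict Implicit. Unset Printing Implicit Defensive.
Import GRing.Theory.
Local Open Scope ring_scope.

(* Commutative ring with unity (possibly the zero ring): comPzRingType. *)
Section Defs.
Variable R : comPzRingType.

Definition is_unit (u : R) : Prop := exists v : R, u * v = 1.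

Definition zero_divisor (r : R) : Prop := exists s : R, s != 0 /\ r * s = 0.

Definition harmless (r : R) : Prop := exists u : R, is_unit u /\ r = 1 - u.

Definition irreducible_elt (r : R) : Prop :=
  forall a b : R, r = a * b -> is_unit a \/ is_unit b.

Definition in_principal (s x : R) : Prop := exists c : R, x = s * c.

Definition pideal_sub (a b : R) : Prop := forall x, in_principal a x -> in_principal b x.

Definition pideal_proper (s : R) : Prop := ~ (forall x, in_principal s x).

Definition B_irreducible (r : R) : Prop :=
  r != 0 /\ ~ is_unit r /\
  forall s : R, pideal_proper s -> pideal_sub r s -> pideal_sub s r.

End Defs.

(* Main.v *)
Require Import Defs.
From mathcomp Require Import all_boot all_algebra.
Local Open Scope ring_scope.
Import GRing.Theory.
From Stdlib Require Import Classical.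

Theorem mainTheorem2 (R : comPzRingType) :
  (forall r : R, zero_divisor r -> harmless r) ->
  forall r : R, B_irreducible r -> irreducible_elt r.
Proof.
move=> H r [r0 [rnu Hmax]] a b rab.
case: (classic (is_unit a)) => [ua|nua]; first by left.
right.
have pa : pideal_proper a.
  move=> all; apply: nua; have [c hc] := all 1.
  by exists c; rewrite -hc.
have sub : pideal_sub r a.
  move=> x [c ->]; exists (b * c); by rewrite rab mulrA.
have [c hc] := Hmax a pa sub a (ex_intro _ 1 (esym (mulr1 a))).
have a0 : a != 0.
  apply/eqP => ha; move/eqP: r0; apply; by rewrite rab ha mul0r.
have zd : zero_divisor (1 - b * c).
  exists a; split => //.
  rewrite mulrBl mul1r; apply/eqP; rewrite subr_eq0; apply/eqP.
  rewrite {1}hc rab mulrC mulrA. by rewrite [LHS]mulrC mulrA.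
have [u [[v uv] e]] := H _ zd.
have bcu : b * c = u.
  by apply: oppr_inj; apply: (addrI 1).
exists (c * v); by rewrite mulrA bcu.
Qed.
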